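(* Let $\eta\in\mathbb{R}$ and let $U=\mathrm{diag}(1,e^{i\frac{2\pi}{3}\eta})$ be a qubit $Z$-phase gate. Let $\alpha,\beta\in\mathbb{R}$ satisfy $2\alpha-\beta=3k$ for some $k\in\mathbb{Z}$ and $\alpha+\beta=\eta$. Consider the two-qutrit diagonal unitary $W$ which, when the first (control) qutrit is in $\ket{0}$, $\ket{1}$, $\ket{2}$, applies respectively $Z(0,0)$, $Z(2\alpha-\beta,\alpha+\beta)$, $Z(\alpha+\beta,2\beta-\alpha)$ to the second (target) qutrit. Then $W$ emulates the $\ket{2}$-controlled $U$ gate: for every $c\in\{0,1,2\}$ and $t\in\{0,1\}$, $W\ket{c,t}=\ket{c,t}$ if $c\in\{0,1\}$ and $W\ket{2,t}=\ket{2}\otimes U\ket{t}$ (identifying qubit basis states with qutrit basis states of the same label).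
   Context: A qutrit is $\mathbb{C}^3$ with basis $\ket{0},\ket{1},\ket{2}$; $\omega=e^{2\pi i/3}$; for $a,b\in\mathbb{R}$, $Z(a,b)=\mathrm{diag}(1,\omega^a,\omega^b)$. In the paper $W$ is the two-qutrit circuit built from CX gates and $Z(\alpha,\beta)$-type phase gates (a controlled-phase construction from phase gadgets), whose action is as described. *)

(* Defs.v *)
From Stdlib Require Import Reals ZArith Arith.
From Coquelicot Require Import Coquelicot.
Open Scope R_scope.

Definition cexpi (theta : R) : C := (cos theta, sin theta).

Definition omega_pow (a : R) : C := cexpi (2 * PI * a / 3).

(* Vectors / matrices indexed by nat; only indices < 3 (qutrit) or < 2 (qubit) matter. *)
Definition qvec := nat -> C.
Definition qmat := nat -> nat -> C.
Definition vec2 := nat -> nat -> C.          (* two-qutrit state |i,j> components *)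

Definition basis (k : nat) : qvec := fun i => if Nat.eqb i k then RtoC 1 else RtoC 0.
Definition ket2 (c t : nat) : vec2 :=
  fun i j => if andb (Nat.eqb i c) (Nat.eqb j t) then RtoC 1 else RtoC 0.
Definition tensor (u v : qvec) : vec2 := fun i j => Cmult (u i) (v j).

Definition Zgate (a b : R) : qmat := fun i j =>
  if Nat.eqb i j then
    match i with 0 => RtoC 1 | 1 => omega_pow a | 2 => omega_pow b | _ => RtoC 0 end
  else RtoC 0.

Definition Ugate (eta : R) : qmat := fun i j =>
  if Nat.eqb i j then
    match i with 0 => RtoC 1 | 1 => cexpi (2 * PI * eta / 3) | _ => RtoC 0 end
  else RtoC 0.

(* Apply a qubit operator to a qubit vector (indices 0,1); the result is
   identified with a qutrit vector with zero |2> component. *)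
Definition apply_qubit (M : qmat) (v : qvec) : qvec := fun i =>
  if Nat.ltb i 2 then Cplus (Cmult (M i 0%nat) (v 0%nat)) (Cmult (M i 1%nat) (v 1%nat))
  else RtoC 0.

(* Two-qutrit operators: matrix entries <i,j| O |k,l> *)
Definition op2 := nat -> nat -> nat -> nat -> C.
Definition apply2 (O : op2) (psi : vec2) : vec2 := fun i j =>
  sum_n (fun k => sum_n (fun l => Cmult (O i j k l) (psi k l)) 2) 2.

Definition ctrl_op (G : nat -> qmat) : op2 := fun i j k l =>
  if Nat.eqb i k then G i j l else RtoC 0.

Definition W (alpha beta : R) : op2 := ctrl_op (fun c =>
  match c with
  | 0 => Zgate 0 0
  | 1 => Zgate (2 * alpha - beta) (alpha + beta)
  | _ => Zgate (alpha + beta) (2 * beta - alpha)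
  end).

(* Main.v *)
Require Import Defs.
From Stdlib Require Import Reals ZArith Arith Lra Lia FunctionalExtensionality.
From Coquelicot Require Import Coquelicot.
Open Scope R_scope.

Lemma sum3 (f : nat -> C) : sum_n f 2 = Cplus (Cplus (f O) (f 1%nat)) (f 2%nat).
Proof. rewrite !sum_Sn, sum_O. reflexivity. Qed.

Lemma omega_int (a : R) (k : Z) : a = 3 * IZR k -> omega_pow a = RtoC 1.
Proof.
  intros ->. unfold omega_pow, cexpi, RtoC.
  replace (2 * PI * (3 * IZR k) / 3) with (2 * (IZR k * PI)) by (field).
  assert (Hs : sin (IZR k * PI) = 0) by (apply sin_eq_0_1; now exists k).
  rewrite cos_2a_sin, Hs, sin_2a, Hs. f_equal; ring.
Qed.

Theorem mainTheorem4 (eta alpha beta : R)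
  (hk : exists k : Z, 2 * alpha - beta = 3 * IZR k)
  (hsum : alpha + beta = eta) :
  (forall c t : nat, (c < 2)%nat -> (t < 2)%nat ->
     apply2 (W alpha beta) (ket2 c t) = ket2 c t) /\
  (forall t : nat, (t < 2)%nat ->
     apply2 (W alpha beta) (ket2 2 t) =
     tensor (basis 2) (apply_qubit (Ugate eta) (basis t))).
Proof.
  destruct hk as [k hk].
  assert (H1 := omega_int _ _ hk).
  assert (H0 := omega_int 0 0 ltac:(simpl; ring)).
  unfold omega_pow, cexpi, RtoC in H0, H1.
  injection H0 as Hc0 Hs0. injection H1 as Hc1 Hs1.
  split.
  - intros c t Hc Ht.
    apply functional_extensionality; intro i.
    apply functional_extensionality; intro j.
    unfold apply2. rewrite sum3. rewrite !sum3.
    unfold W, ctrl_op, ket2, Zgate.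
    destruct c as [|[|c]]; [| | lia]; destruct t as [|[|t]]; try lia;
    destruct i as [|[|[|i]]]; destruct j as [|[|[|j]]]; simpl;
    apply injective_projections; simpl;
    repeat (rewrite Hc0 || rewrite Hs0 || rewrite Hc1 || rewrite Hs1); ring.
  - intros t Ht.
    apply functional_extensionality; intro i.
    apply functional_extensionality; intro j.
    unfold apply2. rewrite !sum3.
    unfold W, ctrl_op, ket2, Zgate, tensor, basis, apply_qubit, Ugate, omega_pow.
    rewrite hsum.
    destruct t as [|[|t]]; try lia;
    destruct i as [|[|[|i]]]; destruct j as [|[|[|j]]]; simpl;
    apply injective_projections; simpl;
    repeat (rewrite Hc0 || rewrite Hs0 || rewrite Hc1 || rewrite Hs1); ring.
Qed.
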